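(* Let $\mathcal{C}$ be either $\mathbf{Sets}$ or $\mathbf{Vec}$ and let $M,N:\mathbf{R}^d\to\mathcal{C}$ be surjective persistence modules. Then (i) $d_{\mathrm{I},d}(\mathrm{dm}(M),\mathrm{dm}(N))\le 2\cdot d_{\mathrm{I},d}^{\mathcal{C}}(M,N)$, and (ii) $d_{\mathrm{I},d}(\mathrm{dm}(M),\mathrm{dm}(N))\le\mathbf{d}_{\mathrm{I},d}^{\mathcal{C}}(M,N)$.
   Context: $\mathbf{R}^d$ has the product order and $\vec\varepsilon=\varepsilon(1,\dots,1)$. A persistence module $M:\mathbf{R}^d\to\mathcal{C}$ is a functor: objects $M_\mathbf{a}$ and morphisms $\varphi_M(\mathbf{a},\mathbf{b}):M_\mathbf{a}\to M_\mathbf{b}$ for $\mathbf{a}\le\mathbf{b}$. It is surjective if every $\varphi_M(\mathbf{a},\mathbf{b})$ is surjective. The dimension function $\mathrm{dm}(M):\mathbf{R}^d\to\mathbf{Z}_+$ sends $\mathbf{a}$ to the cardinality (for $\mathbf{Sets}$) or dimension (for $\mathbf{Vec}$) of $M_\mathbf{a}$ (modules are assumed pointwise finite so this is a nonnegative integer). An $\varepsilon$-interleaving between $M,N$ consists of natural families $f_\mathbf{a}:M_\mathbf{a}\to N_{\mathbf{a}+\vec\varepsilon}$, $g_\mathbf{a}:N_\mathbf{a}\to M_{\mathbf{a}+\vec\varepsilon}$ with $g_{\mathbf{a}+\vec\varepsilon}\circ f_\mathbf{a}=\varphi_M(\mathbf{a},\mathbf{a}+2\vec\varepsilon)$ and $f_{\mathbf{a}+\vec\varepsilon}\circ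 g_\mathbf{a}=\varphi_N(\mathbf{a},\mathbf{a}+2\vec\varepsilon)$; $d_{\mathrm{I},d}^{\mathcal{C}}(M,N)$ is the infimum of $\varepsilon$ admitting one, and $\mathbf{d}_{\mathrm{I},d}^{\mathcal{C}}(M,N)$ the infimum of $\varepsilon$ admitting one with all $f_\mathbf{a},g_\mathbf{a}$ surjective ($\infty$ if none). For functions $F,G:\mathbf{R}^d\to\mathbf{Z}_+$, $d_{\mathrm{I},d}(F,G):=\inf\{\varepsilon\ge0:\forall\mathbf{a},\ F(\mathbf{a})\ge G(\mathbf{a}+\vec\varepsilon),\ G(\mathbf{a})\ge F(\mathbf{a}+\vec\varepsilon)\}$. *)

(* Defs.v *)
From HB Require Import structures.
From mathcomp Require Import all_boot all_order all_algebra.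
From mathcomp Require Import boolp classical_sets reals constructive_ereal ereal.
Set Implicit Arguments. Unset Strict Implicit. Unset Printing Implicit Defensive.
Import Order.TTheory GRing.Theory Num.Theory.
Local Open Scope ring_scope.
Local Open Scope classical_set_scope.

Definition pleq (R : realType) (d : nat) (a b : 'I_d -> R) : bool :=
  [forall i, a i <= b i].

Definition shift (R : realType) (d : nat) (a : 'I_d -> R) (e : R) : 'I_d -> R :=
  fun i => a i + e.

Definition surj (A B : Type) (f : A -> B) : Prop := forall y, exists x, f x = y.

Record setPM (R : realType) (d : nat) := SetPM {
  spm_obj : ('I_d -> R) -> finType;
  spm_map : forall a b, pleq a b -> spm_obj a -> spm_obj b;
  spm_id : forall a (h : pleq a a) x, spm_map h x = x;
  spm_comp : forall a b c (hab : pleq a b) (hbc : pleq b c) (hac : pleq a c) x,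
      spm_map hac x = spm_map hbc (spm_map hab x) }.
Arguments spm_obj {R d} s _.
Arguments spm_map {R d} s {a b} _ _.

Record vecPM (K : fieldType) (R : realType) (d : nat) := VecPM {
  vpm_obj : ('I_d -> R) -> vectType K;
  vpm_map : forall a b, pleq a b -> {linear vpm_obj a -> vpm_obj b};
  vpm_id : forall a (h : pleq a a) x, vpm_map h x = x;
  vpm_comp : forall a b c (hab : pleq a b) (hbc : pleq b c) (hac : pleq a c) x,
      vpm_map hac x = vpm_map hbc (vpm_map hab x) }.
Arguments vpm_obj {K R d} v _.
Arguments vpm_map {K R d} v {a b} _.

Definition set_surjective R d (M : setPM R d) : Prop :=
  forall a b (h : pleq a b), surj (spm_map M h).
Definition vec_surjective K R d (M : vecPM K R d) : Prop :=
  forall a b (h : pleq a b), surj (vpm_map M h).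

Definition set_dm R d (M : setPM R d) : ('I_d -> R) -> nat :=
  fun a => #|spm_obj M a|.
Definition vec_dm K R d (M : vecPM K R d) : ('I_d -> R) -> nat :=
  fun a => \dim (fullv : {vspace vpm_obj M a}).

Definition dI_fun (R : realType) d (F G : ('I_d -> R) -> nat) : \bar R :=
  ereal_inf [set e%:E | e in [set e : R | 0 <= e /\
     forall a, (G (shift a e) <= F a)%N /\ (F (shift a e) <= G a)%N]].

Definition set_interleaving R d (M N : setPM R d) (e : R)
  (f : forall a, spm_obj M a -> spm_obj N (shift a e))
  (g : forall a, spm_obj N a -> spm_obj M (shift a e)) : Prop :=
  [/\ (forall a b (hab : pleq a b) (hab' : pleq (shift a e) (shift b e)) x,
         f b (spm_map M hab x) = spm_map N hab' (f a x)),
      (forall a b (hab : pleq a b) (hab' : pleq (shift a e) (shift b e)) x,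
         g b (spm_map N hab x) = spm_map M hab' (g a x)),
      (forall a (h : pleq a (shift (shift a e) e)) x,
         g (shift a e) (f a x) = spm_map M h x) &
      (forall a (h : pleq a (shift (shift a e) e)) x,
         f (shift a e) (g a x) = spm_map N h x)].

Definition vec_interleaving K R d (M N : vecPM K R d) (e : R)
  (f : forall a, {linear vpm_obj M a -> vpm_obj N (shift a e)})
  (g : forall a, {linear vpm_obj N a -> vpm_obj M (shift a e)}) : Prop :=
  [/\ (forall a b (hab : pleq a b) (hab' : pleq (shift a e) (shift b e)) x,
         f b (vpm_map M hab x) = vpm_map N hab' (f a x)),
      (forall a b (hab : pleq a b) (hab' : pleq (shift a e) (shift b e)) x,
         g b (vpm_map N hab x) = vpm_map M hab' (g a x)),
      (forall a (h : pleq a (shift (shift a e) e)) x,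
         g (shift a e) (f a x) = vpm_map M h x) &
      (forall a (h : pleq a (shift (shift a e) e)) x,
         f (shift a e) (g a x) = vpm_map N h x)].

(* d_{I,d}^Sets and bold d_{I,d}^Sets (surjective interleavings); +oo if none *)
Definition set_dI (R : realType) d (M N : setPM R d) : \bar R :=
  ereal_inf [set e%:E | e in [set e : R | 0 <= e /\
     exists f g, @set_interleaving R d M N e f g]].
Definition set_dI_surj (R : realType) d (M N : setPM R d) : \bar R :=
  ereal_inf [set e%:E | e in [set e : R | 0 <= e /\
     exists f g, @set_interleaving R d M N e f g /\
       (forall a, surj (f a)) /\ (forall a, surj (g a))]].

Definition vec_dI K (R : realType) d (M N : vecPM K R d) : \bar R :=
  ereal_inf [set e%:E | e in [set e : R | 0 <= e /\
     exists f g, @vec_interleaving K R d M N e f g]].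
Definition vec_dI_surj K (R : realType) d (M N : vecPM K R d) : \bar R :=
  ereal_inf [set e%:E | e in [set e : R | 0 <= e /\
     exists f g, @vec_interleaving K R d M N e f g /\
       (forall a, surj (f a)) /\ (forall a, surj (g a))]].

(* Main.v *)
Require Import Defs.
From HB Require Import structures.
From mathcomp Require Import all_boot all_order all_algebra.
From mathcomp Require Import boolp classical_sets reals constructive_ereal ereal.
Import Order.TTheory GRing.Theory Num.Theory.
Local Open Scope ring_scope.
Local Open Scope ereal_scope.

Lemma inf_scale (R : realType) (A B : set R) (c : R) : (0 < c)%R ->
  (forall e, B e -> A (c * e)%R) ->
  ereal_inf [set e%:E | e in A] <= c%:E * ereal_inf [set e%:E | e in B].
Proof.
move=> c0 hAB; rewrite -ereal_inf_pZl //; apply: ereal_inf_le_tmp.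
move=> x [y [e Be <-] <-]; exists (c * e)%R; first exact: hAB.
by rewrite EFinM.
Qed.

Lemma card_surj (A B : finType) (f : A -> B) : surj f -> (#|B| <= #|A|)%N.
Proof.
move=> hs.
have hs' : forall y, exists x, f x == y by move=> y; case: (hs y) => x <-; exists x.
pose g y := xchoose (hs' y).
have gK : cancel g f by move=> y; exact/eqP/(xchooseP (hs' y)).
exact: (leq_card _ (can_inj gK)).
Qed.

Lemma dim_surj (K : fieldType) (V W : vectType K) (f : {linear V -> W}) :
  surj f -> (\dim (fullv : {vspace W}) <= \dim (fullv : {vspace V}))%N.
Proof.
move=> hs.
have : (fullv <= linfun f @: fullv)%VS.
  apply/subvP => w _; case: (hs w) => v <-; rewrite -lfunE.
  by apply: memv_img; apply: memvf.
move/dimvS => h; apply: leq_trans h _.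
rewrite -(limg_ker_dim (linfun f) fullv); exact: leq_addl.
Qed.

Arguments card_surj {A B f}.
Arguments dim_surj {K V W f}.

Lemma pleq_shift (R : realType) d (a : 'I_d -> R) e : (0 <= e)%R -> pleq a (shift a e).
Proof. by move=> e0; apply/forallP => i; rewrite /shift lerDl. Qed.

Lemma shift2 (R : realType) d (a : 'I_d -> R) e :
  shift a (2 * e)%R = shift (shift a e) e.
Proof. by apply/funext => i; rewrite /shift mulr2n mulrDl mul1r addrA. Qed.

Lemma pleq_shift2 (R : realType) d (a : 'I_d -> R) e : (0 <= e)%R ->
  pleq a (shift (shift a e) e).
Proof.
move=> e0; apply/forallP => i; rewrite /shift -addrA lerDl; exact: addr_ge0.
Qed.

Arguments pleq_shift {R d} a {e}.
Arguments pleq_shift2 {R d} a {e}.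


Lemma set_i (R : realType) (d : nat) (M N : setPM R d) : set_surjective M -> set_surjective N ->
     dI_fun (set_dm M) (set_dm N) <= 2%:E * set_dI M N.
Proof.
move=> sM sN.
  apply: inf_scale => // e [e0 [f [g [_ _ h3 h4]]]]; split.
      by apply: mulr_ge0.
    move=> a; rewrite /set_dm shift2; split.
    * apply: (leq_trans _ (card_surj (sM _ _ (pleq_shift a e0)))).
      apply: (card_surj (f := f (shift a e))) => y.
      case: (sN _ _ (pleq_shift2 a e0) y) => x <-.
      exists (g a x); exact: h4.
    * apply: (leq_trans _ (card_surj (sN _ _ (pleq_shift a e0)))).
      apply: (card_surj (f := g (shift a e))) => y.
      case: (sM _ _ (pleq_shift2 a e0) y) => x <-.
      exists (f a x); exact: h3.
Qed.

Lemma set_ii (R : realType) (d : nat) (M N : setPM R d) :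
     dI_fun (set_dm M) (set_dm N) <= set_dI_surj M N.
Proof.
  rewrite -[X in _ <= X]mul1e; apply: inf_scale => // e [e0 [f [g [_ [sf sg]]]]].
    split; first by rewrite mul1r.
    move=> a; rewrite mul1r /set_dm; split; [exact: (card_surj (f := f a)) | exact: (card_surj (f := g a))].
Qed.

Lemma vec_i (R : realType) (d : nat) (K : fieldType) (M N : vecPM K R d) : vec_surjective M -> vec_surjective N ->
     dI_fun (vec_dm M) (vec_dm N) <= 2%:E * vec_dI M N.
Proof.
move=> sM sN.
  apply: inf_scale => // e [e0 [f [g [_ _ h3 h4]]]]; split.
      by apply: mulr_ge0.
    move=> a; rewrite /vec_dm shift2; split.
    * apply: (leq_trans _ (dim_surj (sM _ _ (pleq_shift a e0)))).
      apply: (dim_surj (f := f (shift a e))) => y.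
      case: (sN _ _ (pleq_shift2 a e0) y) => x <-.
      exists (g a x); exact: h4.
    * apply: (leq_trans _ (dim_surj (sN _ _ (pleq_shift a e0)))).
      apply: (dim_surj (f := g (shift a e))) => y.
      case: (sM _ _ (pleq_shift2 a e0) y) => x <-.
      exists (f a x); exact: h3.
Qed.

Lemma vec_ii (R : realType) (d : nat) (K : fieldType) (M N : vecPM K R d) :
     dI_fun (vec_dm M) (vec_dm N) <= vec_dI_surj M N.
Proof.
  rewrite -[X in _ <= X]mul1e; apply: inf_scale => // e [e0 [f [g [_ [sf sg]]]]].
    split; first by rewrite mul1r.
    move=> a; rewrite mul1r /vec_dm; split; [exact: (dim_surj (f := f a)) | exact: (dim_surj (f := g a))].
Qed.

Theorem proposition6p9 (R : realType) (d : nat) :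
  (forall M N : setPM R d, set_surjective M -> set_surjective N ->
     dI_fun (set_dm M) (set_dm N) <= 2%:E * set_dI M N /\
     dI_fun (set_dm M) (set_dm N) <= set_dI_surj M N) /\
  (forall (K : fieldType) (M N : vecPM K R d), vec_surjective M -> vec_surjective N ->
     dI_fun (vec_dm M) (vec_dm N) <= 2%:E * vec_dI M N /\
     dI_fun (vec_dm M) (vec_dm N) <= vec_dI_surj M N).
Proof.
split=> [M N sM sN | K M N sM sN]; split.
- exact: set_i.
- exact: set_ii.
- exact: vec_i.
- exact: vec_ii.
Qed.
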